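(* The category $\mathcal B$ is equivalent to the 2-groupoid $\mathcal K_G$ of $G=\mathbb Z$. The category $\mathcal B_n$ is equivalent to $\mathcal K_G$ for $G=\mathbb Z/n\mathbb Z$.
   Context: For a group $G$, the 2-groupoid $\mathcal K_G$ is the monoidal category whose objects are the elements of $G$, with monoidal product given by multiplication, and whose only morphisms are identity morphisms. $\mathcal B$ is the (non-linear) strict monoidal category whose objects are generated by two objects $\Omega^+,\Omega^-$ (drawn as upward and downward oriented strands), and whose morphisms are planar diagrams generated by the four oriented cups and caps (units/counits of adjunctions in both directions between $\Omega^+$ and $\Omega^-$), modulo the relations: the zigzag (isotopy) relations for these adjunctions; each closed oriented circle (of either orientation) equals the empty diagram; and the identity of $\Omega^+\otimes\Omega^-$ (and of $\Omega^-\otimes\Omega^+$) equals the composite of the appropriate cap followed by the appropriate cup. Only diagrams (not linear combinations) are morphisms. For $n\ge2$, $\mathcal B_n$ is obtained from $\mathcal B$ by adding two further generating morphisms, black $n$-valent vertices $\Omega^+\otimes\cdots\otimes\Omega^+\ (n\text{ factors})\to\mathbb 1$ and $\mathbb 1\to(\Omega^+)^{\otimes n}$, with relations: these vertices are cyclic and invariant under rotation (and similarly for the orientation-reversed versions); the composite of the two vertices in either order equals the identity (of $\mathbb 1$, respectively of $(\Omega^+)^{\otimes n}$). *)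

(* Defs.v *)
From HB Require Import structures.
From mathcomp Require Import all_boot all_order all_algebra.
Set Implicit Arguments. Unset Strict Implicit. Unset Printing Implicit Defensive.
Import GRing.Theory.
Local Open Scope ring_scope.

(* Objects: words in Omega^+ (P, upward) and Omega^- (M, downward);
   the monoidal product of objects is concatenation, the unit is [::]. *)
Inductive sgn := P | M.
Definition flip_sgn (s : sgn) : sgn := match s with P => M | M => P end.
Definition obj := seq sgn.

(* Cup s : 1 -> s (x) flip s,   Cap s : s (x) flip s -> 1   (the four oriented
   cups and caps);  VOut : (Omega^+)^n -> 1, VIn : 1 -> (Omega^+)^n
   (the black n-valent vertices, only available in B_n). *)
Inductive gen := Cup of sgn | Cap of sgn | VOut | VIn.

Inductive term :=
| Tid of obj
| Tgen of gen
| Tcomp of term & term          (* Tcomp f g = f o g (g first) *)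
| Ttens of term & term.

(* [v = None]  : the category B;  [v = Some n] : the category B_n. *)
Inductive typed (v : option nat) : term -> obj -> obj -> Prop :=
| ty_id a : typed v (Tid a) a a
| ty_cup s : typed v (Tgen (Cup s)) [::] [:: s; flip_sgn s]
| ty_cap s : typed v (Tgen (Cap s)) [:: s; flip_sgn s] [::]
| ty_vout n : v = Some n -> typed v (Tgen VOut) (nseq n P) [::]
| ty_vin n : v = Some n -> typed v (Tgen VIn) [::] (nseq n P)
| ty_comp f g a b c : typed v g a b -> typed v f b c -> typed v (Tcomp f g) a c
| ty_tens f g a b c d :
    typed v f a b -> typed v g c d -> typed v (Ttens f g) (a ++ c) (b ++ d).

(* Equality of morphisms: the congruence generated by the axioms of a strict
   monoidal category (planar isotopy) and the defining relations. *)
Inductive req (v : option nat) : term -> term -> Prop :=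
| rq_refl f : req v f f
| rq_sym f g : req v f g -> req v g f
| rq_trans f g h : req v f g -> req v g h -> req v f h
| rq_comp f f' g g' : req v f f' -> req v g g' -> req v (Tcomp f g) (Tcomp f' g')
| rq_tens f f' g g' : req v f f' -> req v g g' -> req v (Ttens f g) (Ttens f' g')
| rq_idl f a b : typed v f a b -> req v (Tcomp (Tid b) f) f
| rq_idr f a b : typed v f a b -> req v (Tcomp f (Tid a)) f
| rq_assoc f g h a b c d : typed v h a b -> typed v g b c -> typed v f c d ->
    req v (Tcomp (Tcomp f g) h) (Tcomp f (Tcomp g h))
| rq_tassoc f g h a b c d e k : typed v f a b -> typed v g c d -> typed v h e k ->
    req v (Ttens (Ttens f g) h) (Ttens f (Ttens g h))
| rq_tunitl f a b : typed v f a b -> req v (Ttens (Tid [::]) f) f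
| rq_tunitr f a b : typed v f a b -> req v (Ttens f (Tid [::])) f
| rq_tid a b : req v (Ttens (Tid a) (Tid b)) (Tid (a ++ b))
| rq_interchange f f' g g' a b c d e k :
    typed v f a b -> typed v f' b c -> typed v g d e -> typed v g' e k ->
    req v (Tcomp (Ttens f' g') (Ttens f g)) (Ttens (Tcomp f' f) (Tcomp g' g))
| rq_zig s :
    req v (Tcomp (Ttens (Tid [:: s]) (Tgen (Cap (flip_sgn s))))
                 (Ttens (Tgen (Cup s)) (Tid [:: s])))
          (Tid [:: s])
| rq_zag s :
    req v (Tcomp (Ttens (Tgen (Cap (flip_sgn s))) (Tid [:: flip_sgn s]))
                 (Ttens (Tid [:: flip_sgn s]) (Tgen (Cup s))))
          (Tid [:: flip_sgn s])
| rq_circle s : req v (Tcomp (Tgen (Cap s)) (Tgen (Cup s))) (Tid [::])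
| rq_idcapcup s : req v (Tcomp (Tgen (Cup s)) (Tgen (Cap s))) (Tid [:: s; flip_sgn s])
(* B_n: rotation invariance of the vertices *)
| rq_rot_out n : v = Some n ->
    req v (Tcomp (Tgen (Cap M))
             (Tcomp (Ttens (Ttens (Tid [:: M]) (Tgen VOut)) (Tid [:: P]))
                    (Ttens (Tgen (Cup M)) (Tid (nseq n P)))))
          (Tgen VOut)
| rq_rot_in n : v = Some n ->
    req v (Tcomp (Ttens (Tgen (Cap M)) (Tid (nseq n P)))
             (Tcomp (Ttens (Ttens (Tid [:: M]) (Tgen VIn)) (Tid [:: P]))
                    (Tgen (Cup M))))
          (Tgen VIn)
| rq_vv1 n : v = Some n -> req v (Tcomp (Tgen VOut) (Tgen VIn)) (Tid [::])
| rq_vv2 n : v = Some n -> req v (Tcomp (Tgen VIn) (Tgen VOut)) (Tid (nseq n P)).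

(* The presented monoidal category (B or B_n) is monoidally equivalent to K_G:
   there is a (strong, hence strict) monoidal functor F to K_G (objects of K_G
   are elements of G, product is the group law, only identity morphisms) that
   is faithful, full and essentially surjective. *)
Definition monoidal_equiv_K (v : option nat) (G : zmodType) : Prop :=
  exists F : obj -> G,
    F [::] = 0 /\
    (forall a b, F (a ++ b) = F a + F b) /\
    (forall f a b, typed v f a b -> F a = F b) /\
    (forall f g a b, typed v f a b -> typed v g a b -> req v f g) /\
    (forall a b, F a = F b -> exists f, typed v f a b) /\
    (forall x : G, exists a, F a = x).

(* Main.v *)
Require Import Defs.
From mathcomp Require Import all_boot all_order all_algebra zify.
From Stdlib Require Import Setoid Morphisms.
Set Implicit Arguments. Unset Strict Implicit. Unset Printing Implicit Defensive.

#[global] Instance req_equiv v : Equivalence (req v).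
Proof. split; [exact: rq_refl | exact: rq_sym | exact: rq_trans]. Qed.
#[global] Instance comp_proper v : Proper (req v ==> req v ==> req v) Tcomp.
Proof. move=> ??????; exact: rq_comp. Qed.
#[global] Instance tens_proper v : Proper (req v ==> req v ==> req v) Ttens.
Proof. move=> ??????; exact: rq_tens. Qed.

Definition wt v T := exists a b, typed v T a b.

Lemma ty_conv v f a b a' b' : typed v f a b -> a = a' -> b = b' -> typed v f a' b'.
Proof. by move=> H <- <-. Qed.
Lemma ty_tens_eq v f g a b c d x y : typed v f a b -> typed v g c d ->
  x = a ++ c -> y = b ++ d -> typed v (Ttens f g) x y.
Proof. by move=> Hf Hg -> ->; apply: ty_tens. Qed.
Lemma ty_id_eq v a x y : x = a -> y = a -> typed v (Tid a) x y.
Proof. by move=> -> ->; apply: ty_id. Qed.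

Lemma inv_comp v f g a c : typed v (Tcomp f g) a c -> exists b, typed v g a b /\ typed v f b c.
Proof. move=> H; inversion H; subst; eauto. Qed.
Lemma inv_tens v f g x y : typed v (Ttens f g) x y ->
  exists a b c d, [/\ typed v f a b, typed v g c d, x = a ++ c & y = b ++ d].
Proof. move=> H; inversion H; subst; do 4 eexists; split; eauto. Qed.
Lemma inv_id v a x y : typed v (Tid a) x y -> x = a /\ y = a.
Proof. move=> H; inversion H; subst; eauto. Qed.

Lemma nseqPc n l : nseq n P ++ P :: l = P :: (nseq n P ++ l).
Proof. by elim: n => //= n ->. Qed.
Ltac leq := solve [ done | by rewrite ?cats0 ?catA | by rewrite ?cats0 -?catA /= ?nseqPc ?cats0 ].

Ltac tc := lazymatch goal with
 | |- typed _ (Tid _) _ _ => first [apply: ty_id | apply: ty_id_eq; leq]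
 | |- typed _ (Tgen (Cup _)) _ _ => apply: ty_cup
 | |- typed _ (Tgen (Cap _)) _ _ => apply: ty_cap
 | |- typed _ (Tgen VOut) _ _ => first [eapply ty_vout; (eassumption || reflexivity)
      | eapply ty_conv; [eapply ty_vout; (eassumption || reflexivity) | leq | leq]]
 | |- typed _ (Tgen VIn) _ _ => first [eapply ty_vin; (eassumption || reflexivity)
      | eapply ty_conv; [eapply ty_vin; (eassumption || reflexivity) | leq | leq]]
 | |- typed _ (Tcomp _ _) _ _ => eapply ty_comp; [tc|tc]
 | |- typed _ (Ttens _ _) _ _ => first [eapply ty_tens; [tc|tc] | eapply ty_tens_eq; [tc|tc|leq|leq]]
 | |- _ => first [eassumption | eauto with tydb]
end.
Ltac tw := solve [do 2 eexists; tc].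
Create HintDb tydb.
Ltac side := try (solve [tw]); try reflexivity; try done.

Section Infra.
Variable v : option nat.
Local Notation "f ≈ g" := (req v f g) (at level 70).
Local Notation wt := (wt v).

Lemma idl f b : wt (Tcomp (Tid b) f) -> Tcomp (Tid b) f ≈ f.
Proof.
move=> [x [y /inv_comp [c [H1 /inv_id [? ?]]]]]; subst; exact: rq_idl H1.
Qed.
Lemma idr f a : wt (Tcomp f (Tid a)) -> Tcomp f (Tid a) ≈ f.
Proof.
move=> [x [y /inv_comp [c [/inv_id [? ?] H1]]]]; subst; exact: rq_idr H1.
Qed.
Lemma assoc f g h : wt (Tcomp (Tcomp f g) h) -> Tcomp (Tcomp f g) h ≈ Tcomp f (Tcomp g h).
Proof.
move=> [x [y /inv_comp [c [H1 /inv_comp [d [H2 H3]]]]]]; exact: rq_assoc H1 H2 H3.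
Qed.
Lemma assocr f g h : wt (Tcomp f (Tcomp g h)) -> Tcomp f (Tcomp g h) ≈ Tcomp (Tcomp f g) h.
Proof.
move=> [x [y /inv_comp [c [/inv_comp [d [H1 H2]] H3]]]]; symmetry; exact: rq_assoc H1 H2 H3.
Qed.
Lemma tassoc f g h : wt f -> wt g -> wt h -> Ttens (Ttens f g) h ≈ Ttens f (Ttens g h).
Proof. move=> [a [b H1]] [c [d H2]] [e [k H3]]; exact: rq_tassoc H1 H2 H3. Qed.
Lemma tassocr f g h : wt f -> wt g -> wt h -> Ttens f (Ttens g h) ≈ Ttens (Ttens f g) h.
Proof. by move=> *; symmetry; apply: tassoc. Qed.
Lemma tunitl f : wt f -> Ttens (Tid [::]) f ≈ f.
Proof. move=> [a [b H]]; exact: rq_tunitl H. Qed.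
Lemma tunitr f : wt f -> Ttens f (Tid [::]) ≈ f.
Proof. move=> [a [b H]]; exact: rq_tunitr H. Qed.
Lemma tid a b : Ttens (Tid a) (Tid b) ≈ Tid (a ++ b).
Proof. exact: rq_tid. Qed.
Lemma interch f f' g g' : wt (Tcomp f' f) -> wt (Tcomp g' g) ->
  Tcomp (Ttens f' g') (Ttens f g) ≈ Ttens (Tcomp f' f) (Tcomp g' g).
Proof.
move=> [a [c /inv_comp [b [H1 H2]]]] [d [k /inv_comp [e [H3 H4]]]].
exact: rq_interchange H1 H2 H3 H4.
Qed.
Lemma interchr f f' g g' : wt (Tcomp f' f) -> wt (Tcomp g' g) ->
  Ttens (Tcomp f' f) (Tcomp g' g) ≈ Tcomp (Ttens f' g') (Ttens f g).
Proof. by move=> *; symmetry; apply: interch. Qed.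

Lemma comp_tid_r f g w : wt (Tcomp f g) ->
  Tcomp (Ttens f (Tid w)) (Ttens g (Tid w)) ≈ Ttens (Tcomp f g) (Tid w).
Proof.
move=> Hfg; rewrite interch; side; rewrite idl; side.
Qed.
Lemma comp_tid_l f g w : wt (Tcomp f g) ->
  Tcomp (Ttens (Tid w) f) (Ttens (Tid w) g) ≈ Ttens (Tid w) (Tcomp f g).
Proof.
move=> Hfg; rewrite interch; side; rewrite idl; side.
Qed.
Lemma tens_split_l f g a b c d : typed v f a b -> typed v g c d ->
  Ttens f g ≈ Tcomp (Ttens f (Tid d)) (Ttens (Tid a) g).
Proof.
move=> Hf Hg; rewrite interch; side; rewrite idl; side; rewrite idr; side.
Qed.
Lemma tens_split_r f g a b c d : typed v f a b -> typed v g c d ->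
  Ttens f g ≈ Tcomp (Ttens (Tid b) g) (Ttens f (Tid c)).
Proof.
move=> Hf Hg; rewrite interch; side; rewrite idl; side; rewrite idr; side.
Qed.

Lemma zig s : Ttens (Tid [:: s]) (Tgen (Cap (flip_sgn s))) ≈ Ttens (Tgen (Cap s)) (Tid [:: s]).
Proof.
transitivity (Tcomp (Tcomp (Ttens (Tid [:: s]) (Tgen (Cap (flip_sgn s))))
                           (Ttens (Tgen (Cup s)) (Tid [:: s])))
                    (Ttens (Tgen (Cap s)) (Tid [:: s]))).
  rewrite assoc; last by case: s; tw.
  rewrite comp_tid_r; last by case: s; tw.
  rewrite rq_idcapcup tid idr; last by case: s; tw. reflexivity.
rewrite rq_zig idl; last by case: s; tw. reflexivity.
Qed.

Lemma slide n : v = Some n ->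
  Ttens (Tid [:: P]) (Tgen VOut) ≈ Ttens (Tgen VOut) (Tid [:: P]).
Proof.
move=> e.
rewrite -{1}(rq_rot_out e).
rewrite -comp_tid_l; side. rewrite -comp_tid_l; side.
rewrite (zig P) /=.
rewrite [Ttens (Ttens (Tid [:: M]) _) _]tassoc; side.
rewrite [Ttens (Tid [:: P]) (Ttens (Tid [:: M]) _)]tassocr; side. rewrite tid /=.
rewrite [Ttens (Tid [:: P]) (Ttens (Tgen (Cup M)) _)]tassocr; side.
rewrite assocr; side. rewrite interch; side. rewrite idr; side. rewrite idl; side.
have HV : typed v (Ttens (Tgen VOut) (Tid [:: P])) (nseq n P ++ [:: P]) ([::] ++ [:: P]) by tc.
rewrite (tens_split_r (ty_cap v P) HV) tunitl; side.
rewrite assoc; side.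
rewrite (_ : nseq n P ++ [:: P] = [:: P] ++ nseq n P); last by rewrite nseqPc cats0.
rewrite -tid tassocr; side. rewrite comp_tid_r; side.
have zagM := rq_zag v M; simpl in zagM. rewrite zagM tid idr; side.
Qed.

Lemma slide_many n k : v = Some n ->
  Ttens (Tid (nseq k P)) (Tgen VOut) ≈ Ttens (Tgen VOut) (Tid (nseq k P)).
Proof.
move=> e; elim: k => [|k IH] /=.
  rewrite tunitl; side. rewrite tunitr; side.
rewrite -(tid [:: P] (nseq k P)) tassoc; side. rewrite IH tassocr; side.
rewrite (slide e) tassoc; side.
Qed.
End Infra.

Import GRing.Theory.
Local Open Scope ring_scope.

Section Gen.
Variable v : option nat.
Variable G : zmodType.
Variable val : sgn -> G.
Variable word : G -> obj.
Variables mu mui : sgn -> G -> term.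
Local Notation "f ≈ g" := (req v f g) (at level 70).
Local Notation wt := (wt v).
Hypothesis mu_ty : forall x z, typed v (mu x z) (x :: word z) (word (val x + z)).
Hypothesis mui_ty : forall x z, typed v (mui x z) (word (val x + z)) (x :: word z).
Hypothesis mu_inv : forall x z, Tcomp (mui x z) (mu x z) ≈ Tid (x :: word z).
Hypothesis valflip : forall s, val s + val (flip_sgn s) = 0.
Hypothesis muB : forall s z,
  Tcomp (mu s (val (flip_sgn s) + z)) (Ttens (Tid [:: s]) (mu (flip_sgn s) z))
  ≈ Ttens (Tgen (Cap s)) (Tid (word z)).

Fixpoint Fz (a : obj) (z : G) : G := if a is x :: a' then val x + Fz a' z else z.
Definition F a := Fz a 0.
Hypothesis FPn : forall n, v = Some n -> F (nseq n P) = 0.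
Hypothesis Fword : forall z, F (word z) = z.
Hypothesis word0 : word 0 = [::].

Fixpoint Phi (a : obj) (z : G) : term :=
  if a is x :: a' then Tcomp (mu x (Fz a' z)) (Ttens (Tid [:: x]) (Phi a' z))
  else Tid (word z).
Fixpoint Phi' (a : obj) (z : G) : term :=
  if a is x :: a' then Tcomp (Ttens (Tid [:: x]) (Phi' a' z)) (mui x (Fz a' z))
  else Tid (word z).

Hypothesis muC : forall n, v = Some n -> forall z,
  Phi (nseq n P) z ≈ Ttens (Tgen VOut) (Tid (word z)).

Lemma Phi_ty a z : typed v (Phi a z) (a ++ word z) (word (Fz a z)).
Proof. elim: a => [|x a IH] /=; first exact: ty_id. by tc. Qed.
Lemma Phi'_ty a z : typed v (Phi' a z) (word (Fz a z)) (a ++ word z).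
Proof. elim: a => [|x a IH] /=; first exact: ty_id. by tc. Qed.
Local Hint Resolve mu_ty mui_ty Phi_ty Phi'_ty : tydb.

Lemma Fz_cat a c z : Fz (a ++ c) z = Fz a (Fz c z).
Proof. by elim: a => //= x a ->. Qed.
Lemma Fz_F a z : Fz a z = F a + z.
Proof.
rewrite /F; elim: a => [|x a IH] /=; first by rewrite add0r.
by rewrite IH addrA.
Qed.
Lemma F_cat a c : F (a ++ c) = F a + F c.
Proof. by rewrite /F Fz_cat Fz_F. Qed.

Lemma F_inv f a b : typed v f a b -> F a = F b.
Proof.
elim=> [c|s|s|n e|n e|f1 g1 a1 b1 c1 _ IH1 _ IH2|f1 g1 a1 b1 c1 d1 _ IH1 _ IH2] //.
- by rewrite /F /= addr0 valflip.
- by rewrite /F /= addr0 valflip.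
- by rewrite (FPn e).
- by rewrite (FPn e).
- by rewrite IH1.
- by rewrite !F_cat IH1 IH2.
Qed.

Lemma PhiCat a c z :
  Phi (a ++ c) z ≈ Tcomp (Phi a (Fz c z)) (Ttens (Tid a) (Phi c z)).
Proof.
elim: a => [|x a IH] /=.
  rewrite tunitl; side. rewrite idl; side.
rewrite IH Fz_cat -comp_tid_l; side.
rewrite assocr; side.
rewrite -(tid _ [:: x] a) tassoc; side.
Qed.

Lemma PhiK a z : Tcomp (Phi' a z) (Phi a z) ≈ Tid (a ++ word z).
Proof.
elim: a => [|x a IH] /=; first by rewrite idl; side.
rewrite assoc; side. rewrite [Tcomp (mui _ _) _]assocr; side.
rewrite mu_inv idl; side. rewrite comp_tid_l; side. rewrite IH tid. reflexivity.
Qed.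

Lemma Q f a b : typed v f a b -> forall z,
  Tcomp (Phi b z) (Ttens f (Tid (word z))) ≈ Phi a z.
Proof.
elim=> /=.
- move=> c z. rewrite tid idr; side.
- move=> s z. rewrite tid idr; side. rewrite muB.
  rewrite comp_tid_r; side. rewrite rq_circle tunitl; side.
- move=> s z. rewrite idl; side. rewrite tid idr; side. rewrite muB; side.
- move=> n e z. rewrite idl; side. rewrite muC; side.
- move=> n e z. rewrite muC // comp_tid_r; side. rewrite (rq_vv1 e) tunitl; side.
- move=> f1 g1 a1 b1 c1 Hg IHg Hf IHf z.
  rewrite -comp_tid_r; side. rewrite assocr; side. rewrite IHf IHg; side.
- move=> f1 g1 a1 b1 c1 d1 Hf IHf Hg IHg z.
  rewrite !PhiCat tassoc; side. rewrite assoc; side.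
  rewrite interch; side. rewrite idl; side. rewrite IHg.
  have -> : Fz d1 z = Fz c1 z by rewrite !Fz_F (F_inv Hg).
  rewrite (tens_split_l Hf (Phi_ty c1 z)) assocr; side.
  rewrite IHf; side.
Qed.

Lemma faithful f a b : typed v f a b -> f ≈ Tcomp (Phi' b 0) (Phi a 0).
Proof.
move=> Hf. rewrite -(Q Hf 0) assocr; side. rewrite PhiK idl; side.
rewrite word0 tunitr; side.
Qed.

Lemma gen_equiv : monoidal_equiv_K v G.
Proof.
exists F; split; first by []. split; first exact: F_cat.
split; first exact: F_inv.
split.
  move=> f g a b Hf Hg. rewrite (faithful Hf) (faithful Hg); reflexivity.
split; last by move=> x; exists (word x); apply: Fword.
move=> a b E; exists (Tcomp (Phi' b 0) (Phi a 0)).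
have H : typed v (Tcomp (Phi' b 0) (Phi a 0)) (a ++ word 0) (b ++ word 0).
  apply: ty_comp (Phi_ty a 0) _. have -> : Fz a 0 = Fz b 0 by exact E. exact: Phi'_ty.
by apply: ty_conv H _ _; rewrite word0 cats0.
Qed.
End Gen.

Close Scope ring_scope.
Import GRing.Theory.
Local Open Scope ring_scope.

Definition valZ (s : sgn) : int := if s is P then 1 else -1.
Definition wordZ (z : int) : obj :=
  match z with Posz k => nseq k P | Negz k => nseq k.+1 M end.
Definition muZ (s : sgn) (z : int) : term :=
  match s, z with
  | P, Posz k => Tid (P :: nseq k P)
  | P, Negz k => Ttens (Tgen (Cap P)) (Tid (nseq k M))
  | M, Posz 0 => Tid [:: M]
  | M, Posz k.+1 => Ttens (Tgen (Cap M)) (Tid (nseq k P))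
  | M, Negz k => Tid (M :: nseq k.+1 M)
  end.
Definition muiZ (s : sgn) (z : int) : term :=
  match s, z with
  | P, Posz k => Tid (P :: nseq k P)
  | P, Negz k => Ttens (Tgen (Cup P)) (Tid (nseq k M))
  | M, Posz 0 => Tid [:: M]
  | M, Posz k.+1 => Ttens (Tgen (Cup M)) (Tid (nseq k P))
  | M, Negz k => Tid (M :: nseq k.+1 M)
  end.

Lemma e1 k : 1 + Posz k = Posz k.+1. Proof. lia. Qed.
Lemma e2 k : 1 + Negz k.+1 = Negz k. Proof. rewrite !NegzE; lia. Qed.
Lemma e3 : 1 + Negz 0 = Posz 0. Proof. rewrite !NegzE; lia. Qed.
Lemma e4 : -1 + Posz 0 = Negz 0. Proof. rewrite !NegzE; lia. Qed.
Lemma e5 k : -1 + Posz k.+1 = Posz k. Proof. lia. Qed.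
Lemma e6 k : -1 + Negz k = Negz k.+1. Proof. rewrite !NegzE; lia. Qed.
Ltac ez := rewrite ?e1 ?e2 ?e3 ?e4 ?e5 ?e6 /= ?subSS ?subn0.

Lemma muZ_ty x z : typed None (muZ x z) (x :: wordZ z) (wordZ (valZ x + z)).
Proof.
case: x; case: z => [[|k]|[|k]] /=; ez; tc.
Qed.
Lemma muiZ_ty x z : typed None (muiZ x z) (wordZ (valZ x + z)) (x :: wordZ z).
Proof.
case: x; case: z => [[|k]|[|k]] /=; ez; tc.
Qed.

Lemma muZ_inv x z : req None (Tcomp (muiZ x z) (muZ x z)) (Tid (x :: wordZ z)).
Proof.
case: x; case: z => [[|k]|[|k]] /=;
  first [ solve [rewrite idl; side] | rewrite comp_tid_r; side; rewrite rq_idcapcup tid; side ].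
Qed.

Lemma valZflip s : valZ s + valZ (flip_sgn s) = 0.
Proof. by case: s; rewrite /= ?subrr ?addNr. Qed.

Lemma muZB s z :
  req None (Tcomp (muZ s (valZ (flip_sgn s) + z)) (Ttens (Tid [:: s]) (muZ (flip_sgn s) z)))
   (Ttens (Tgen (Cap s)) (Tid (wordZ z))).
Proof.
have zP := zig None P; have zM := zig None M; simpl in zP, zM.
case: s; case: z => [[|k]|[|k]] /=; ez;
  first [ solve [rewrite tid idr; side]
        | solve [rewrite idl; side; rewrite tunitr; side; rewrite zM; side]
        | solve [rewrite idl; side; rewrite tassocr; side; rewrite ?zM ?zP; side;
                 rewrite tassoc; side; rewrite tid; side] ].
Qed.

Lemma FzP k : Fz valZ (nseq k P) 0 = Posz k.
Proof. by elim: k => //= k ->; rewrite e1. Qed.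
Lemma FzM k : Fz valZ (nseq k.+1 M) 0 = Negz k.
Proof. elim: k => [|k IH]; first by rewrite /= e4. by change (valZ M + Fz valZ (nseq k.+1 M) 0 = Negz k.+1); rewrite IH e6. Qed.

Lemma equivZ : monoidal_equiv_K None int.
Proof.
apply: (gen_equiv muZ_ty muiZ_ty muZ_inv valZflip muZB) => //.
by case=> [k|k]; rewrite /F ?FzP ?FzM.
Qed.

Close Scope ring_scope.
Import GRing.Theory.

Section ZN.
Variable m : nat.
Local Notation N := m.+2.
Local Notation v := (Some N).
Local Notation ZN := 'Z_N.

Definition valN (s : sgn) : ZN := if s is P then 1%R else (-1)%R.
Definition wordN (z : ZN) : obj := nseq z P.
Definition muPn (k : nat) : term := if k == m.+1 then Tgen VOut else Tid (P :: nseq k P).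
Definition muMn (k : nat) : term :=
  if k is k'.+1 then Ttens (Tgen (Cap M)) (Tid (nseq k' P))
  else Tcomp (Ttens (Tgen (Cap M)) (Tid (nseq m.+1 P))) (Ttens (Tid [:: M]) (Tgen VIn)).
Definition muiPn (k : nat) : term := if k == m.+1 then Tgen VIn else Tid (P :: nseq k P).
Definition muiMn (k : nat) : term :=
  if k is k'.+1 then Ttens (Tgen (Cup M)) (Tid (nseq k' P))
  else Tcomp (Ttens (Tid [:: M]) (Tgen VOut)) (Ttens (Tgen (Cup M)) (Tid (nseq m.+1 P))).
Definition muN (s : sgn) (z : ZN) : term := if s is P then muPn z else muMn z.
Definition muiN (s : sgn) (z : ZN) : term := if s is P then muiPn z else muiMn z.

Lemma vS (z : ZN) : nat_of_ord (1 + z)%R = if (z : nat) == m.+1 then 0 else (z : nat).+1.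
Proof.
rewrite add_1_Zp /=. case: z => k Hk /=. case: eqP => [->|H]; first by rewrite modnn.
rewrite modn_small //. move: Hk H; rewrite /Zp_trunc /=. lia.
Qed.
Lemma vP (z : ZN) : nat_of_ord (-1 + z)%R = if (z : nat) is k.+1 then k else m.+1.
Proof.
rewrite add_N1_Zp /=. case: z => [[|k] Hk] /=; first by rewrite modn_small.
rewrite modnDr modn_small //. move: Hk; rewrite /Zp_trunc /=. lia.
Qed.

Lemma ltZ (z : ZN) : (z : nat) < N.
Proof. by case: z. Qed.

Lemma muN_ty x z : typed v (muN x z) (x :: wordN z) (wordN (valN x + z)%R).
Proof.
rewrite /wordN; case: x; cbv beta iota delta [muN muiN valN].
  rewrite vS /muPn; case: eqP => [->|H] /=; tc.
rewrite vP; case: z => [[|k] Hk] /=; tc.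
Qed.
Lemma muiN_ty x z : typed v (muiN x z) (wordN (valN x + z)%R) (x :: wordN z).
Proof.
rewrite /wordN; case: x; cbv beta iota delta [muN muiN valN].
  rewrite vS /muiPn; case: eqP => [->|H] /=; tc.
rewrite vP; case: z => [[|k] Hk] /=; tc.
Qed.

Lemma muN_inv x z : req v (Tcomp (muiN x z) (muN x z)) (Tid (x :: wordN z)).
Proof.
rewrite /wordN; case: x; cbv beta iota delta [muN muiN valN].
  rewrite /muPn /muiPn; case: eqP => [->|H] /=.
    rewrite (rq_vv2 (n:=N)) //; reflexivity.
  rewrite idl; side.
case: z => [[|k] Hk] /=; last first.
  rewrite comp_tid_r; side; rewrite rq_idcapcup tid; side.
rewrite assoc; side. rewrite [Tcomp (Ttens (Tgen (Cup M)) _) _]assocr; side.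
rewrite comp_tid_r; side. rewrite rq_idcapcup tid idl; side.
rewrite comp_tid_l; side. rewrite (rq_vv1 (n:=N)) // tid; side.
Qed.

Lemma muNB s z :
  req v (Tcomp (muN s (valN (flip_sgn s) + z)%R) (Ttens (Tid [:: s]) (muN (flip_sgn s) z)))
   (Ttens (Tgen (Cap s)) (Tid (wordN z))).
Proof.
have zP := zig v P; have zM := zig v M; simpl in zP, zM.
rewrite /wordN; case: s; cbv beta iota delta [muN valN flip_sgn].
  rewrite vP; case: z => [[|k] Hk] /=.
    rewrite /muPn eqxx /muMn.
    rewrite -comp_tid_l; side. rewrite [Ttens (Tid [:: P]) (Ttens (Tgen (Cap M)) _)]tassocr; side.
    rewrite zP tassoc; side. rewrite [Ttens (Tid [:: P]) (Ttens (Tid [:: M]) _)]tassocr; side.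
    rewrite !tid interch; side. rewrite idr; side. rewrite idl; side.
    rewrite (tens_split_r (ty_cap v P) (@ty_vin v N erefl)) tunitl; side.
    rewrite assocr; side. rewrite (rq_vv1 (n:=N)) // idl; side.
  rewrite /muPn (_ : (k == m.+1) = false); last by apply/eqP; move: Hk; rewrite /Zp_trunc /=; lia.
  rewrite /muMn idl; side. rewrite tassocr; side. rewrite zP tassoc; side. rewrite tid; side.
rewrite vS /muPn; case: eqP => [H|H].
  rewrite H /muMn assoc; side. rewrite comp_tid_l; side. rewrite (rq_vv2 (n:=N)) // tid idr; side.
rewrite /muMn tid idr; side.
Qed.

Lemma FzN j (z : ZN) : nat_of_ord (Fz valN (nseq j P) z) = (j + z) %% N.
Proof.
elim: j => [|j IH]; first by rewrite /= modn_small // ltZ.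
change (nat_of_ord (1 + Fz valN (nseq j P) z)%R = (j.+1 + z) %% N).
rewrite add_1_Zp /= IH -[(Zp_trunc N).+2]/N.
by rewrite -addn1 modnDml addn1 addSn.
Qed.

Lemma FPnN n : v = Some n -> F valN (nseq n P) = 0%R.
Proof. case=> <-; apply: ord_inj; rewrite /F FzN /= addn0 modnn. by []. Qed.
Lemma FwordN z : F valN (wordN z) = z.
Proof. apply: ord_inj; rewrite /F /wordN FzN /= addn0 modn_small //; exact: ltZ. Qed.

Local Notation PhiN := (Phi valN wordN muN).

Lemma claimA j (z : ZN) : j + z < N -> req v (PhiN (nseq j P) z) (Tid (nseq j P ++ nseq z P)).
Proof.
elim: j => [|j IH] H /=; first reflexivity.
rewrite IH; last lia.
rewrite /muPn FzN modn_small; last lia.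
rewrite (_ : (j + z == m.+1) = false); last by apply/eqP; lia.
rewrite nseqD tid idl; side.
Qed.

Lemma claimB j (z : ZN) : N <= j + z -> j <= N ->
  req v (PhiN (nseq j P) z) (Ttens (Tid (nseq (j + z - N) P)) (Tgen VOut)).
Proof.
have Hz := ltZ z.
elim: j => [|j IH] H1 H2; first by exfalso; lia.
rewrite /=.
case: (ltnP (j + z) N) => Hjz.
  rewrite claimA // /muPn FzN modn_small //.
  rewrite (_ : (j + z == m.+1) = true); last by apply/eqP; lia.
  rewrite (_ : j.+1 + z - N = 0); last by lia.
  rewrite /= tid -nseqD (_ : j + z = m.+1); last by lia.
  rewrite idr; side. rewrite tunitl; side.
have Hmod : (j + z) %% N = j + z - N.
  rewrite {1}(_ : j + z = (j + z - N) + N); last by lia.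
  rewrite modnDr modn_small //; lia.
rewrite IH; try lia.
rewrite /muPn FzN Hmod (_ : (j + z - N == m.+1) = false); last by apply/eqP; lia.
rewrite (_ : j.+1 + z - N = (j + z - N).+1); last by lia.
rewrite tassocr; side. rewrite tid idl; side.
Qed.

Lemma muCN n : v = Some n -> forall z,
  req v (PhiN (nseq n P) z) (Ttens (Tgen VOut) (Tid (wordN z))).
Proof.
case=> <- z. have Hz := ltZ z.
rewrite claimB; try lia.
rewrite (_ : N + z - N = z); last by lia.
rewrite (@slide_many v N z erefl); reflexivity.
Qed.

Lemma valNflip s : (valN s + valN (flip_sgn s) = 0)%R.
Proof. by case: s; rewrite /= ?subrr ?addNr. Qed.

Lemma equivN : monoidal_equiv_K v ZN.
Proof.
exact: (gen_equiv muN_ty muiN_ty muN_inv valNflip muNB FPnN FwordN (erefl _) muCN).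
Qed.
End ZN.

Close Scope ring_scope.

Theorem theoremB1 :
  monoidal_equiv_K None int /\
  (forall n : nat, (2 <= n)%N -> monoidal_equiv_K (Some n) 'Z_n).
Proof.
split; first exact: equivZ.
case=> [|[|m]] // _. exact: equivN.
Qed.
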